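(* If $G$ is a finite connected graph, then $\mathrm{gp_e}(G) \le 2\cdot \mathrm{ip_e}(G)$.
   Context: A geodesic (isometric path) in a graph is a shortest path between its endpoints. A set $S$ of edges of a graph $G$ is an edge general position set if no geodesic of $G$ contains three edges of $S$; $\mathrm{gp_e}(G)$ is the maximum cardinality of an edge general position set of $G$. An isometric path edge cover of $G$ is a collection of isometric paths of $G$ such that every edge of $G$ lies on at least one path of the collection; $\mathrm{ip_e}(G)$ is the minimum cardinality of an isometric path edge cover of $G$. *)

(* Defs.v *)
From mathcomp Require Import all_boot.
Set Implicit Arguments. Unset Strict Implicit. Unset Printing Implicit Defensive.

Section Graphs.
Variable T : finType.
Variable g : rel T.

Definition simple_graph := symmetric g /\ irreflexive g.
Definition connected_graph := forall x y : T, connect g x y.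

Definition edge_set : {set {set T}} :=
  [set e | [exists x, exists y, g x y && (e == [set x; y])]].

(* A walk is given by its start vertex x and the list p of subsequent
   vertices (path g x p); its length is size p. *)
Definition walk_edges (x : T) (p : seq T) : {set {set T}} :=
  [set e | has (fun ab : T * T => e == [set ab.1; ab.2]) (zip (x :: p) p)].

Definition geodesic (x : T) (p : seq T) : Prop :=
  path g x p /\
  forall q : seq T, path g x q -> last x q = last x p -> size p <= size q.

Definition edge_gp_set (S : {set {set T}}) : Prop :=
  S \subset edge_set /\
  forall x p, geodesic x p -> #|S :&: walk_edges x p| <= 2.

Definition is_gpe (n : nat) : Prop :=
  (exists S, edge_gp_set S /\ #|S| = n) /\
  (forall S, edge_gp_set S -> #|S| <= n).

Definition ip_edge_cover (C : seq (T * seq T)) : Prop :=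
  (forall c, c \in C -> geodesic c.1 c.2) /\
  (forall e, e \in edge_set -> exists2 c, c \in C & e \in walk_edges c.1 c.2).

Definition is_ipe (n : nat) : Prop :=
  (exists C, ip_edge_cover C /\ size C = n) /\
  (forall C, ip_edge_cover C -> n <= size C).

End Graphs.

(* Main.v *)
Require Import Defs.
From mathcomp Require Import all_boot.

Lemma cover_bound (I : eqType) (U : finType) (W : I -> {set U}) (C : seq I) :
  forall S : {set U},
  (forall e, e \in S -> exists2 c, c \in C & e \in W c) ->
  (forall c, c \in C -> #|S :&: W c| <= 2) ->
  #|S| <= 2 * size C.
Proof.
elim: C => [|c C IH] S Hcov Hb.
  rewrite muln0 leqn0 cards_eq0; apply/eqP/setP => e; rewrite inE.
  by apply/negP => /Hcov [c].
rewrite -(cardsID (W c) S) /= mulnS leq_add //.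
  by apply: Hb; rewrite inE eqxx.
apply: IH.
  move=> e; rewrite inE => /andP [He1 He2].
  have [c' Hc' Hec'] := Hcov e He2.
  move: Hc'; rewrite inE => /orP [/eqP Ec|Hc']; first by subst c'; rewrite Hec' in He1.
  by exists c'.
move=> c' Hc'; apply: leq_trans (Hb c' _); last by rewrite inE Hc' orbT.
by apply: subset_leq_card; apply: setSI; apply: subsetDl.
Qed.

Theorem lemma2p2 (T : finType) (g : rel T) :
  simple_graph g -> connected_graph g ->
  forall a b : nat, is_gpe g a -> is_ipe g b -> a <= 2 * b.
Proof.
move=> _ _ a b [[S [[HSsub HS] <-]] _] [[C [[HCg HCcov] <-]] _].
apply: (@cover_bound _ _ (fun c : T * seq T => walk_edges c.1 c.2)).
  move=> e He; apply: HCcov; exact: (subsetP HSsub).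
move=> c Hc; apply: HS; exact: HCg.
Qed.
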